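(* Let $t\ge 1$ be an integer, let $\mathcal A$ be an alphabet, and let $\mathfrak D_t$ be the simple 2-level network $([2t,2t],[1,1])$, with an adversary able to corrupt up to $t$ of the edges outgoing from the source. Then, for every positive integer $i$, the $i$-shot capacity of $\mathfrak D_t$ (in Scenario A.1 as well as in Scenario A.2) is \[C_i(\mathfrak D_t,\mathcal A,\mathbf A_{\mathfrak D_t})=1.\]
   Context: An alphabet is a finite set $\mathcal A$ with $|\mathcal A|\ge 2$. For positive integers $a_j,b_j$, the simple 2-level network $([a_1,\dots,a_n],[b_1,\dots,b_n])$ is the directed acyclic multigraph with a source $S$, intermediate nodes $V_1,\dots,V_n$, a single terminal $T$, exactly $a_j$ parallel edges from $S$ to $V_j$ and exactly $b_j$ parallel edges from $V_j$ to $T$, and no other edges. Each edge carries one symbol of $\mathcal A$. A network code is a family $\mathcal F=\{\mathcal F_{V_j}:\mathcal A^{a_j}\to\mathcal A^{b_j}\}_j$. In one use, the source sends $x\in\mathcal A^{a_1+\dots+a_n}$ on its outgoing edges (the set $\mathcal U_S$), the adversary may replace the symbols on up to $t$ edges of $\mathcal U_S$ by arbitrary symbols, each $V_j$ applies $\mathcal F_{V_j}$ to the symbols it receives and sends the result to $T$. The fan-out set $\Omega_{\mathcal F}(x)$ is the set of all vectors $T$ can receive. For $i$ uses with the same network code, the input is $(x^1,\dots,x^i)$ and: in Scenario A.1 the adversary fixes one set $W\subseteq\mathcal U_S$ with $|W|\le t$ and in each of the $i$ rounds may alter (arbitrarily, independently per round) only symbols on edges of $W$; in Scenario A.2 the adversary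 may choose a different set of at most $t$ edges in each round, so the fan-out set is $\Omega_{\mathcal F}(x^1)\times\dots\times\Omega_{\mathcal F}(x^i)$. A nonempty code $C\subseteq(\mathcal A^{a_1+\dots+a_n})^i$ is unambiguous if distinct codewords have disjoint fan-out sets. The $i$-shot capacity $C_i$ is the maximum of $\log_{|\mathcal A|}(|C|)/i$ over all network codes and unambiguous codes $C$. *)

(* Defs.v *)
From Stdlib Require Import Reals.
From mathcomp Require Import all_boot.
Set Implicit Arguments.
Unset Strict Implicit.
Unset Printing Implicit Defensive.

Section SimpleTwoLevel.
Variables (A : finType) (n : nat) (a b : 'I_n -> nat).

Definition src_edge := {j : 'I_n & 'I_(a j)}.
Definition term_edge := {j : 'I_n & 'I_(b j)}.

Definition input := {ffun src_edge -> A}.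
Definition output := {ffun term_edge -> A}.

Definition netcode :=
  {dffun forall j : 'I_n, {ffun {ffun 'I_(a j) -> A} -> {ffun 'I_(b j) -> A}}}.

Definition net_out (F : netcode) (x : input) : output :=
  [ffun o : term_edge =>
     F (tag o) [ffun l : 'I_(a (tag o)) => x (Tagged (fun j => 'I_(a j)) l)]
       (tagged o)].

Definition agree_outside (W : {set src_edge}) (x x' : input) : bool :=
  [forall e, (e \notin W) ==> (x e == x' e)].

Inductive scenario := A1 | A2.

Variables (t i : nat).

Definition codeword := {ffun 'I_i -> input}.
Definition received := {ffun 'I_i -> output}.

(* Scenario A.1: one fixed set W (|W| <= t) for all i rounds. *)
Definition fanout_A1 (F : netcode) (x : codeword) : {set received} :=
  [set y : received | [exists W : {set src_edge}, (#|W| <= t) &&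
     [exists x' : codeword,
        [forall r, agree_outside W (x r) (x' r) && (y r == net_out F (x' r))]]]].

(* Scenario A.2: a possibly different set in each round
   (the product of the one-shot fan-out sets). *)
Definition fanout_A2 (F : netcode) (x : codeword) : {set received} :=
  [set y : received | [forall r, [exists W : {set src_edge}, (#|W| <= t) &&
     [exists x' : input, agree_outside W (x r) x' && (y r == net_out F x')]]]].

Definition fanout (s : scenario) :=
  match s with A1 => fanout_A1 | A2 => fanout_A2 end.

Definition unambiguous (s : scenario) (F : netcode) (C : {set codeword}) : bool :=
  (C != set0) &&
  [forall c1 in C, forall c2 in C,
     (c1 != c2) ==> [disjoint fanout s F c1 & fanout s F c2]].

Definition max_code_size (s : scenario) : nat :=
  \max_(F : netcode) \max_(C : {set codeword} | unambiguous s F C) #|C|.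

Definition capacity (s : scenario) : R :=
  Rdiv (Rdiv (ln (INR (max_code_size s))) (ln (INR #|A|))) (INR i).

End SimpleTwoLevel.

Definition Dt_a (t : nat) : 'I_2 -> nat := fun _ => (2 * t)%N.
Definition Dt_b : 'I_2 -> nat := fun _ => 1%N.

(* Main.v *)
Require Import Defs.
From Stdlib Require Import Reals.
From mathcomp Require Import all_boot.
From mathcomp Require Import zify.
From Stdlib Require Import Lra.

Set Implicit Arguments.
Unset Strict Implicit.
Unset Printing Implicit Defensive.

Section Proof.
Variables (A : finType) (t i : nat).
Hypothesis ht : (0 < t)%N.

Local Notation a := (Dt_a t).
Local Notation b := Dt_b.
Local Notation SE := (src_edge a).
Local Notation inp := (input A a).
Local Notation cw := (codeword A a i).
Local Notation NC := (netcode A a b).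
Local Notation rcv := (received A b i).

Definition edge (j : 'I_2) (l : 'I_(2 * t)) : SE :=
  @Tagged 'I_2 j (fun j => 'I_(a j)) l.
Definition edgeT (j : 'I_2) : term_edge b :=
  @Tagged 'I_2 j (fun j => 'I_(b j)) ord0.

Lemma I2_cases (j : 'I_2) : j = ord0 \/ j = ord_max.
Proof.
case: j => [[|[|m]] hm]; [left|right|by []]; exact: val_inj.
Qed.

Lemma A1_sub_A2 (F : NC) (c : cw) : fanout_A1 t F c \subset fanout_A2 t F c.
Proof.
apply/subsetP => y; rewrite !inE => /existsP [W /andP [hW /existsP [x' /forallP H]]].
apply/forallP => r; apply/existsP; exists W; rewrite hW /=.
apply/existsP; exists (x' r); exact: H.
Qed.

Definition node (j : 'I_2) (x : inp) : {ffun 'I_(2 * t) -> A} :=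
  [ffun l => x (edge j l)].

Definition sig0 (F : NC) (c : cw) : {ffun 'I_i -> A} :=
  [ffun r => F ord0 (node ord0 (c r)) ord0].

Definition mix1 (x1 x2 : inp) : inp :=
  [ffun e : SE => if (tag e == ord0) || (val (tagged e) < t) then x1 e else x2 e].
Definition mix2 (x1 x2 : inp) : inp :=
  [ffun e : SE => if tag e == ord0 then x2 e
                  else if val (tagged e) < t then x1 e else x2 e].

Definition W1 : {set SE} := [set e : SE | (tag e != ord0) && (t <= val (tagged e))].
Definition W2 : {set SE} := [set e : SE | (tag e != ord0) && (val (tagged e) < t)].

Lemma lt_tk (k : 'I_t) : t + k < 2 * t.
Proof. have := ltn_ord k; lia. Qed.
Lemma lt_k (k : 'I_t) : k < 2 * t.
Proof. have := ltn_ord k; lia. Qed.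

Lemma card_W1 : #|W1| <= t.
Proof.
rewrite -[X in _ <= X](card_ord t).
apply: (leq_trans _ (leq_imset_card (fun k : 'I_t => edge ord_max (Ordinal (lt_tk k))) _)).
apply/subset_leq_card/subsetP => -[j l]; rewrite inE /= => /andP [hj hl].
have hk : l - t < t by have := ltn_ord l; rewrite /Dt_a; lia.
apply/imsetP; exists (Ordinal hk) => //.
case: (I2_cases j) hj l hl hk => -> // _ l hl hk.
rewrite /edge; congr Tagged; apply: val_inj => /=; lia.
Qed.

Lemma card_W2 : #|W2| <= t.
Proof.
rewrite -[X in _ <= X](card_ord t).
apply: (leq_trans _ (leq_imset_card (fun k : 'I_t => edge ord_max (Ordinal (lt_k k))) _)).
apply/subset_leq_card/subsetP => -[j l]; rewrite inE /= => /andP [hj hl].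
apply/imsetP; exists (Ordinal hl) => //.
case: (I2_cases j) hj l hl => -> // _ l hl.
rewrite /edge; congr Tagged; apply: val_inj => /=; lia.
Qed.

Lemma net_mix (F : NC) (x1 x2 : inp) :
  F ord0 (node ord0 x1) ord0 = F ord0 (node ord0 x2) ord0 ->
  net_out F (mix1 x1 x2) = net_out F (mix2 x1 x2).
Proof.
move=> H; rewrite /net_out; apply/ffunP => -[j k]; rewrite !ffunE /=.
case: (I2_cases j) => e; subst j.
- have -> : k = ord0 by apply: val_inj; case: k => [[]].
  have -> : [ffun l : 'I_(a ord0) => mix1 x1 x2 (Tagged (fun j => 'I_(a j)) l)] = node ord0 x1.
    by apply/ffunP => l; rewrite !ffunE.
  have -> : [ffun l : 'I_(a ord0) => mix2 x1 x2 (Tagged (fun j => 'I_(a j)) l)] = node ord0 x2.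
    by apply/ffunP => l; rewrite !ffunE.
  exact: H.
- congr (F _ _ _); apply/ffunP => l; rewrite !ffunE /=.
  by case: ifP.
Qed.

Lemma ub (s : scenario) (F : NC) (C : {set cw}) :
  unambiguous t s F C -> #|C| <= #|A| ^ i.
Proof.
move=> /andP [_ /forall_inP H].
have inj : {in C &, injective (sig0 F)}.
  move=> c1 c2 h1 h2 e; apply/eqP; apply/negPn/negP => ne.
  have /forall_inP /(_ c2 h2) /implyP /(_ ne) hd := H c1 h1.
  set y : rcv := [ffun r => net_out F (mix1 (c1 r) (c2 r))].
  have y1 : y \in fanout_A1 t F c1.
    rewrite inE; apply/existsP; exists W1; rewrite card_W1 /=.
    apply/existsP; exists [ffun r => mix1 (c1 r) (c2 r)]; apply/forallP => r.
    rewrite !ffunE eqxx andbT; apply/forallP => e0; apply/implyP.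
    rewrite inE ffunE negb_and negbK -ltnNge => hn.
    by case: ifP => //; case/orP: hn => ->; rewrite ?orbT.
  have y2 : y \in fanout_A1 t F c2.
    rewrite inE; apply/existsP; exists W2; rewrite card_W2 /=.
    apply/existsP; exists [ffun r => mix2 (c1 r) (c2 r)]; apply/forallP => r.
    rewrite !ffunE net_mix; last by have := congr1 (fun f : {ffun 'I_i -> A} => f r) e; rewrite !ffunE.
    rewrite eqxx andbT; apply/forallP => e'; apply/implyP.
    rewrite inE ffunE negb_and negbK -leqNgt => hn.
    by case: ifP => // h0; case/orP: hn; [rewrite h0 | move=> h; rewrite ltnNge h].
  have [z1 z2] : y \in fanout t s F c1 /\ y \in fanout t s F c2.
    by clear H; case: s hd => /= _; split => //; apply: (subsetP (A1_sub_A2 _ _)).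
  by rewrite (disjointFr hd z1) in z2.
rewrite -(card_in_imset inj).
apply: leq_trans (max_card _) _.
by rewrite card_ffun card_ord.
Qed.


Definition cnt (u : {ffun 'I_(2 * t) -> A}) (x : A) := #|[set l | u l == x]|.

Section LB.
Variable a0 : A.

Definition gmin (u : {ffun 'I_(2 * t) -> A}) : A :=
  odflt a0 [pick x | (t <= cnt u x) &&
     [forall y, (t <= cnt u y) ==> (enum_rank x <= enum_rank y)]].

Lemma gmin_spec u x : t <= cnt u x ->
  t <= cnt u (gmin u) /\ enum_rank (gmin u) <= enum_rank x.
Proof.
rewrite /gmin; case: pickP => [z /andP [pz /forallP mz] | none] px.
  by split => //; exact: (implyP (mz x) px).
exfalso; case: (@arg_minnP A x (fun y => t <= cnt u y) (fun y => nat_of_ord (enum_rank y)) px) => z pz mz.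
have := none z; rewrite pz /=; move/negP; apply; apply/forallP => y.
by apply/implyP => py; apply: mz.
Qed.

Lemma cnt_disj u x y : x != y -> cnt u x + cnt u y <= 2 * t.
Proof.
move=> ne; rewrite /cnt -cardsUI.
have -> : [set l | u l == x] :&: [set l | u l == y] = set0.
  apply/setP => l; rewrite !inE; apply/negP => /andP [/eqP -> /eqP e].
  by rewrite e eqxx in ne.
rewrite cards0 addn0; apply: leq_trans (max_card _) _; by rewrite card_ord.
Qed.

Lemma gmin_maj u x : t < cnt u x -> gmin u = x.
Proof.
move=> h; have [pg _] := gmin_spec (ltnW h).
apply/eqP; apply/negPn/negP => ne; have := cnt_disj u ne; lia.
Qed.

Definition F0 : NC :=
  [ffun j : 'I_2 => ([ffun u : {ffun 'I_(2 * t) -> A} => [ffun _ : 'I_1 => gmin u]]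
      : {ffun {ffun 'I_(a j) -> A} -> {ffun 'I_(b j) -> A}})].

Definition enc (m : {ffun 'I_i -> A}) : cw := [ffun r => [ffun _ => m r]].

Definition dec (y : rcv) : {ffun 'I_i -> A} :=
  [ffun r => let o0 := y r (edgeT ord0) in let o1 := y r (edgeT ord_max) in
             if enum_rank o0 <= enum_rank o1 then o1 else o0].

Lemma net_F0 (x : inp) j : net_out F0 x (edgeT j) = gmin (node j x).
Proof. by rewrite /net_out !ffunE. Qed.

Lemma edge_inj j : injective (edge j).
Proof. move=> l1 l2 e; exact: (congr1 (fun e : SE => (tagged e : 'I_(2 * t))) e). Qed.

Lemma dec_ok m y : y \in fanout_A2 t F0 (enc m) -> dec y = m.
Proof.
rewrite inE => /forallP Hy; apply/ffunP => r.
move: (Hy r) => /existsP [W /andP [hW /existsP [x' /andP [/forallP hag /eqP hy]]]].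
rewrite ffunE /= hy !net_F0.
set D := fun j => [set l | x' (edge j l) != m r].
have cntD j : 2 * t - #|D j| <= cnt (node j x') (m r).
  have e := cardsC (D j); rewrite card_ord in e; rewrite -[X in X - _ <= _]e addKn.
  apply/subset_leq_card/subsetP => l; rewrite !inE ffunE negbK.
  by [].
have DW j : edge j @: D j \subset W.
  apply/subsetP => e /imsetP [l]; rewrite inE => hl ->.
  apply/negPn/negP => hn; have := implyP (hag (edge j l)) hn.
  by rewrite !ffunE eq_sym (negbTE hl).
have sumD : #|D ord0| + #|D ord_max| <= t.
  rewrite -(card_imset _ (@edge_inj ord0)) -(card_imset _ (@edge_inj ord_max)).
  rewrite -cardsUI.
  have -> : edge ord0 @: D ord0 :&: edge ord_max @: D ord_max = set0.
    apply/setP => e; rewrite !inE; apply/negP => /andP [/imsetP [l1 _ ->] /imsetP [l2 _ e2]].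
    by have := congr1 (fun e : SE => val (tag e)) e2.
  rewrite cards0 addn0; apply: leq_trans hW.
  by apply/subset_leq_card; rewrite subUset !DW.
have c0 := cntD ord0; have c1 := cntD ord_max.
case: (ltnP #|D ord0| t) => h0.
- rewrite (gmin_maj (u := node ord0 x') (x := m r)); last lia.
  have [_ hr] := gmin_spec (u := node ord_max x') (x := m r) ltac:(lia).
  case: leqP => // hlt.
  by apply: enum_rank_inj; apply: val_inj; apply/eqP; rewrite eqn_leq hr hlt.
- rewrite (gmin_maj (u := node ord_max x') (x := m r)); last lia.
  have [_ hr] := gmin_spec (u := node ord0 x') (x := m r) ltac:(lia).
  by rewrite hr.
Qed.


Lemma lt0_2t : 0 < 2 * t.
Proof. lia. Qed.

Lemma enc_inj : injective enc.
Proof.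
move=> m1 m2 e; apply/ffunP => r.
have := congr1 (fun c : cw => c r (edge ord0 (Ordinal lt0_2t))) e.
by rewrite !ffunE.
Qed.

Lemma lb s : #|A| ^ i <= max_code_size A a b t i s.
Proof.
set C0 : {set cw} := enc @: [set: {ffun 'I_i -> A}].
have hC : unambiguous t s F0 C0.
  apply/andP; split.
    apply/set0Pn; exists (enc [ffun _ => a0]); apply: imset_f; by rewrite inE.
  apply/forall_inP => c1 /imsetP [m1 _ ->]; apply/forall_inP => c2 /imsetP [m2 _ ->].
  apply/implyP => ne; rewrite disjoint_subset; apply/subsetP => y h1; rewrite inE; apply/negP => h2.
  have [z1 z2] : y \in fanout_A2 t F0 (enc m1) /\ y \in fanout_A2 t F0 (enc m2).
    by clear C0; case: s h1 h2 => /= h1 h2; split => //; apply: (subsetP (A1_sub_A2 _ _)).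
  by move: ne; rewrite -(dec_ok z1) -(dec_ok z2) eqxx.
have e : #|C0| = #|A| ^ i.
  by rewrite card_imset; [rewrite cardsT card_ffun card_ord | exact: enc_inj].
rewrite -e /max_code_size.
have h1 := @leq_bigmax_cond _ (fun C => unambiguous t s F0 C) (fun C => #|C|) C0 hC.
have h2 := @leq_bigmax _ (fun F => \max_(C | unambiguous t s F C) #|C|) F0.
apply: (leq_trans h1). apply: (leq_bigmax F0).
Qed.

End LB.

End Proof.

Lemma INR_expn m n : INR (m ^ n) = pow (INR m) n.
Proof.
elim: n => [|n IH]; first by rewrite expn0.
by rewrite expnS mult_INR IH.
Qed.

Theorem proposition4p7 (A : finType) (t : nat) (ht : (1 <= t)%N)
  (hA : (2 <= #|A|)%N) (i : nat) (hi : (1 <= i)%N) (s : scenario) :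
  capacity A (Dt_a t) Dt_b t i s = R1.
Proof.
have /card_gt0P [a0 _] : 0 < #|A| by lia.
have hm : max_code_size A (Dt_a t) Dt_b t i s = #|A| ^ i.
  apply/eqP; rewrite eqn_leq (@lb A t i ht a0 s) andbT.
  apply/bigmax_leqP => F _; apply/bigmax_leqP => C hC; exact: ub hC.
rewrite /capacity hm INR_expn ln_pow; last first.
  apply: lt_0_INR; apply/ltP; lia.
have hq : Rlt R1 (INR #|A|) by apply: lt_1_INR; apply/ltP; lia.
have hl : Rlt R0 (ln (INR #|A|)).
  have := ln_increasing 1 (INR #|A|); rewrite ln_1 => h; apply: h; lra.
have hi' : Rlt R0 (INR i) by apply: lt_0_INR; apply/ltP; lia.
field; split; apply: Rgt_not_eq => //.
Qed.
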